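(* Let $0<p<1$ and let $A\subseteq \mathbb{R}^n$. For every $x\in p\text{-conv}(A)$ with $x\neq 0$ there exist linearly independent vectors $P_1,\ldots,P_k\in A$ with $k\le n$ such that $x\in p\text{-conv}\{P_1,\ldots,P_k\}$. Moreover, if $0\in p\text{-conv}(A)$, then there exist $P_1,\ldots,P_k\in A$ with $k\le n+1$ such that $0\in p\text{-conv}\{P_1,\ldots,P_k\}$.
   Context: Let $0<p<1$ and let $X$ be a real vector space. A set $B\subseteq X$ is called $p$-convex if $\lambda x+\mu y\in B$ whenever $x,y\in B$ and $\lambda,\mu\ge 0$ with $\lambda^p+\mu^p=1$. For $A\subseteq X$, the $p$-convex hull $p\text{-conv}(A)$ is the intersection of all $p$-convex subsets of $X$ containing $A$. *)

(* Defs.v *)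
From HB Require Import structures.
From mathcomp Require Import all_boot all_order all_algebra.
From mathcomp Require Import all_classical all_reals all_analysis.
Set Implicit Arguments. Unset Strict Implicit. Unset Printing Implicit Defensive.
Import Order.TTheory GRing.Theory Num.Theory.
Local Open Scope classical_set_scope.
Local Open Scope ring_scope.

Definition pconvex (R : realType) (V : lmodType R) (p : R) (B : set V) : Prop :=
  forall x y (lam mu : R), B x -> B y -> 0 <= lam -> 0 <= mu ->
    lam `^ p + mu `^ p = 1 -> B (lam *: x + mu *: y).

Definition pconv (R : realType) (V : lmodType R) (p : R) (A : set V) : set V :=
  [set x | forall B : set V, pconvex p B -> A `<=` B -> B x].

(* Main.v *)
Require Import Defs.
From HB Require Import structures.
From mathcomp Require Import all_boot all_order all_algebra.
From mathcomp Require Import all_classical all_reals all_analysis.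
From mathcomp Require Import ring lra.
Set Implicit Arguments. Unset Strict Implicit. Unset Printing Implicit Defensive.
Import Order.TTheory GRing.Theory Num.Theory.
Import numFieldNormedType.Exports.
Local Open Scope classical_set_scope.
Local Open Scope ring_scope.
Lemma cont_pw (R : realType) (q : R) : 0 < q ->
  continuous (fun x : R => powR (Num.max x 0) q).
Proof.
move=> q0 x.
have [x0|x0|->] := ltgtP x 0.
- apply: (near_cst_continuous 0).
  near=> y. have : y < 0 by near: y; exact: lt_nbhsl.
  by move=> y0; rewrite max_r ?ltW // powR0 // gt_eqF.
- have hd : {for x, continuous (fun y : R => powR y q)}.
    apply: differentiable_continuous; apply/(@derivable1_diffP R).
    by apply: derivable_powR; rewrite in_itv /= andbT.
  have e : Num.max x 0 `^ q = x `^ q by rewrite max_l // ltW.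
  rewrite /continuous_at e; apply: cvg_trans hd; apply: near_eq_cvg.
  near=> y. have : 0 < y by near: y; exact: lt_nbhsr.
  by move=> y0 /=; rewrite max_l // ltW.
- apply/cvgrPdist_lt => e e0.
  have d0 : 0 < powR (e/2) (q^-1) by rewrite powR_gt0 // divr_gt0.
  near=> y. have : `|y| < powR (e/2) (q^-1) by near: y; exists (powR (e/2) (q^-1)) => //= z /=; rewrite sub0r normrN.
  move=> hy.
  rewrite max_r // powR0 ?gt_eqF // sub0r normrN ger0_norm ?powR_ge0 //.
  apply: (@le_lt_trans _ _ (powR (powR (e/2) q^-1) q)).
    apply: ge0_ler_powR; rewrite ?nnegrE ?le_max ?lexx ?orbT ?powR_ge0 ?ltW //.
    by rewrite gt_max d0 andbT; exact: le_lt_trans (ler_norm y) hy.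
  rewrite -(@powRrM R) mulVf ?gt_eqF // powRr1 ?ltr_pdivrMr ?ltr_pMr ?ltr1n ?ltW ?divr_gt0 //.
Unshelve. all: by end_near.
Qed.
Lemma pc_step (R : realType) (V : lmodType R) (p : R) (B : set V) (y : V) (t : R) :
  0 < p -> pconvex p B -> B y -> 0 <= t <= 1 ->
  B ((powR t p^-1 + powR (1 - t) p^-1) *: y).
Proof.
move=> p0 hB By /andP[t0 t1].
rewrite scalerDl; apply: hB => //; rewrite ?powR_ge0 //.
rewrite -!(@powRrM R) mulVf ?gt_eqF // !powRr1 ?subr_ge0 //.
by rewrite addrC subrK.
Qed.

Lemma half_lt1 (R : realType) (p : R) : 0 < p -> p < 1 ->
  2 * powR (2^-1) p^-1 < 1.
Proof.
move=> p0 p1.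
have h2 : 0 < (2^-1 : R) < 1.
  by rewrite invr_gt0 ltr0n /= invf_lt1 ?ltr0n // ltr1n.
have hl : ln (2^-1 : R) < 0 by apply: ln_lt0.
rewrite /powR gt_eqF ?(andP h2).1 //.
rewrite -ltr_pdivlMl ?ltr0n // mulr1 -{2}(lnK (andP h2).1).
rewrite ?posrE ?(andP h2).1 // ltr_expR gtr_nMl // invf_gt1 //.
Qed.

Lemma pc_itv (R : realType) (V : lmodType R) (p : R) (B : set V) (y : V) (r : R) :
  0 < p -> p < 1 -> pconvex p B -> B y ->
  2 * powR (2^-1) p^-1 <= r <= 1 -> B (r *: y).
Proof.
move=> p0 p1 hB By hr.
pose g := fun x : R => powR (Num.max x 0) p^-1.
pose f := fun t : R => g t + g (1 - t).
have gc : continuous g by apply: cont_pw; rewrite invr_gt0.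
have fc : continuous f.
  move=> x; apply: continuousD; first exact: gc.
  apply: (continuous_comp (f := fun t : R => 1 - t) (g := g)); last exact: gc.
  by apply: continuousB; [exact: cst_continuous | exact: cvg_id].
have h0 : (0:R) <= 2^-1 by rewrite invr_ge0 ler0n.
have [t ht ft] : exists2 t, t \in `[0, 2^-1] & f t = r.
  apply: IVT => //; first exact: continuous_subspaceT.
  have -> : f 0 = 1.
    by rewrite /f /g subr0 max_r // max_l // powR0 ?powR1 ?add0r // invr_neq0 // gt_eqF.
  have -> : f 2^-1 = 2 * powR (2^-1) p^-1.
    have e : (1 - 2^-1 : R) = 2^-1 by rewrite {1}(splitr 1) div1r addrK.
    by rewrite /f /g e max_l // mulr2n mulrDl mul1r.
  have hc := half_lt1 p0 p1.
  by rewrite (min_r (ltW hc)) (max_l (ltW hc)).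
move: ht; rewrite in_itv /= => /andP[t0 t1].
have t1' : t <= 1 by apply: le_trans t1 _; rewrite invf_le1 ?ler1n ?ltr0n.
have := pc_step p0 hB By (t := t); rewrite t0 t1' => /(_ isT).
by rewrite -ft /f /g max_l // max_l // subr_ge0.
Qed.

Lemma pc_scale (R : realType) (V : lmodType R) (p : R) (B : set V) (y : V) (s : R) :
  0 < p -> p < 1 -> pconvex p B -> B y -> 0 < s <= 1 -> B (s *: y).
Proof.
move=> p0 p1 hB By /andP[s0 s1].
set c := 2 * powR (2^-1) p^-1.
have c1 : c < 1 := half_lt1 p0 p1.
have c0 : 0 < c by rewrite mulr_gt0 // powR_gt0 // invr_gt0 ltr0n.
have key : forall k r, c ^+ k <= r <= 1 -> B (r *: y).
  elim=> [|k IH] r /andP[hr1 hr2].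
    rewrite expr0 in hr1; have -> : r = 1 by apply/eqP; rewrite eq_le hr2 hr1.
    by rewrite scale1r.
  have [cr|rc] := leP c r.
    by apply: (pc_itv (p:=p)) => //; rewrite cr hr2.
  have -> : r = c * (r / c) by rewrite mulrC divfK // gt_eqF.
  rewrite -scalerA; apply: (pc_itv (p:=p)) => //; last by rewrite -/c lexx ltW.
  apply: IH; rewrite ler_pdivrMr // mul1r (ltW rc) andbT.
  by rewrite ler_pdivlMr // -exprSr.
have hev : \forall n \near \oo, c ^+ n < s.
  have hz : `|c| < 1 by rewrite ger0_norm ?ltW.
  have /cvgrPdist_lt/(_ s s0) := cvg_expr hz.
  apply: filterS => n; rewrite sub0r normrN ger0_norm ?exprn_ge0 ?ltW //.
case: hev => N _ hN.
apply: (key N); rewrite s1 andbT ltW //; apply: hN => /=; exact: leqnn.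
Qed.

Lemma powR_div_mul (R : realType) (x s p : R) : 0 <= x -> 0 < s ->
  powR (x / s) p * powR s p = powR x p.
Proof.
move=> x0 s0; rewrite -powRM ?divr_ge0 ?(ltW s0) // divfK // gt_eqF //.
Qed.

Lemma pc_comb (R : realType) (V : lmodType R) (p : R) (B : set V) (m : nat)
   (lam : 'I_m -> R) (a : 'I_m -> V) :
  0 < p -> pconvex p B -> (forall i, B (a i)) -> (forall i, 0 <= lam i) ->
  \sum_i powR (lam i) p = 1 -> B (\sum_i lam i *: a i).
Proof.
move=> p0 hB; elim: m lam a => [|m IH] lam a hA hl hs.
  by move: hs; rewrite big_ord0 => /eqP; rewrite eq_sym oner_eq0.
rewrite big_ord_recl; move: hs; rewrite big_ord_recl.
set r := \sum_(i < m) _ => hs.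
have r0 : 0 <= r by apply: sumr_ge0 => i _; exact: powR_ge0.
have [r00|rpos] := eqVneq r 0.
  have hz : forall i : 'I_m, lam (lift ord0 i) = 0.
    move=> i; apply: (@powR_eq0_eq0 _ _ p).
    apply: (psumr_eq0P (P := predT) (F := fun i => powR (lam (lift ord0 i)) p)) => //.
    by move=> j _; exact: powR_ge0.
  rewrite big1 ?addr0; last by move=> i _; rewrite hz scale0r.
  have := hB (a ord0) (a ord0) (lam ord0) 0 (hA _) (hA _) (hl _) (lexx 0).
  by rewrite powR0 ?gt_eqF // addr0 -hs r00 addr0 scale0r addr0; apply.
have rp : 0 < r by rewrite lt_neqAle eq_sym rpos r0.
set s := powR r p^-1.
have s0 : 0 < s by rewrite powR_gt0.
have sp : powR s p = r by rewrite -powRrM mulVf ?gt_eqF // powRr1.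
have := IH (fun i => lam (lift ord0 i) / s) (fun i => a (lift ord0 i)).
move=> /(_ (fun i => hA _)) /(_ (fun i => divr_ge0 (hl _) (ltW s0))).
have e1 : \sum_(i < m) powR (lam (lift ord0 i) / s) p = 1.
  apply: (mulIf (x := powR s p)); first by rewrite gt_eqF // powR_gt0.
  rewrite mul1r big_distrl /= [RHS]sp /r.
  by apply: eq_bigr => i _; rewrite powR_div_mul.
move=> /(_ e1) hBy.
have -> : \sum_(i < m) lam (lift ord0 i) *: a (lift ord0 i) =
          s *: \sum_(i < m) (lam (lift ord0 i) / s) *: a (lift ord0 i).
  rewrite scaler_sumr; apply: eq_bigr => i _.
  by rewrite scalerA mulrC divfK // gt_eqF //.
apply: hB => //; last by rewrite sp.
exact: ltW.
Qed.

Lemma pc_in_hull (R : realType) (V : lmodType R) (p : R) (m : nat)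
   (lam : 'I_m -> R) (a : 'I_m -> V) :
  0 < p -> p < 1 -> (forall i, 0 <= lam i) ->
  0 < \sum_i powR (lam i) p -> \sum_i powR (lam i) p <= 1 ->
  pconv p (range a) (\sum_i lam i *: a i).
Proof.
move=> p0 p1 hl w0 w1 B hB hA.
set w := \sum_i _ in w0 w1.
set s := powR w p^-1.
have s0 : 0 < s by rewrite powR_gt0.
have s1 : s <= 1.
  have := @ge0_ler_powR R p^-1 _ w 1 _ _ w1; rewrite powR1 /=; apply.
  - by rewrite invr_ge0 ltW.
  - by rewrite nnegrE ltW.
  - by rewrite nnegrE.
have sp : powR s p = w by rewrite -powRrM mulVf ?gt_eqF // powRr1 // ltW.
have := @pc_comb R V p B m (fun i => lam i / s) a p0 hB.
move=> /(_ (fun i => hA _ (ex_intro2 _ _ i I erefl))).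
move=> /(_ (fun i => divr_ge0 (hl i) (ltW s0))).
have e1 : \sum_i powR (lam i / s) p = 1.
  apply: (mulIf (x := powR s p)); first by rewrite gt_eqF // powR_gt0.
  rewrite mul1r big_distrl /= [RHS]sp /w.
  by apply: eq_bigr => i _; rewrite powR_div_mul.
move=> /(_ e1) hBy.
have := pc_scale p0 p1 hB hBy (s := s); rewrite s0 s1 => /(_ isT).
rewrite scaler_sumr; congr B; apply: eq_bigr => i _.
by rewrite scalerA mulrC divfK // gt_eqF.
Qed.

Lemma split_l m n (j : 'I_m) : fintype.split (lshift n j) = inl j.
Proof. exact: (unsplitK (inl j)). Qed.
Lemma split_r m n (k : 'I_n) : fintype.split (rshift m k) = inr k.
Proof. exact: (unsplitK (inr k)). Qed.

Lemma hull_rep (R : realType) (V : lmodType R) (p : R) (A : set V) (x : V) :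
  0 < p -> pconv p A x ->
  exists m (lam : 'I_m -> R) (a : 'I_m -> V), [/\ (forall i, A (a i)),
     (forall i, 0 <= lam i), \sum_i powR (lam i) p = 1 &
     x = \sum_i lam i *: a i].
Proof.
move=> p0 hx.
apply: (hx [set x | exists m (lam : 'I_m -> R) (a : 'I_m -> V), [/\ (forall i, A (a i)),
     (forall i, 0 <= lam i), \sum_i powR (lam i) p = 1 &
     x = \sum_i lam i *: a i]]).
- move=> x1 x2 l mu [m1 [l1 [a1 [hA1 hl1 hs1 ->]]]] [m2 [l2 [a2 [hA2 hl2 hs2 ->]]]].
  move=> l0 mu0 hlm.
  exists (m1 + m2), (fun i => match fintype.split i with inl j => l * l1 j | inr j => mu * l2 j end).
  exists (fun i => match fintype.split i with inl j => a1 j | inr j => a2 j end).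
  split.
  + by move=> i; case: (fintype.split i).
  + by move=> i; case: (fintype.split i) => j; apply: mulr_ge0.
  + rewrite big_split_ord /=.
    under eq_bigr do rewrite split_l.
    under [X in _ + X = _]eq_bigr do rewrite split_r.
    rewrite -hlm; congr (_ + _).
      under eq_bigr do rewrite powRM //.
      by rewrite -big_distrr /= hs1 mulr1.
    under eq_bigr do rewrite powRM //.
    by rewrite -big_distrr /= hs2 mulr1.
  + rewrite big_split_ord /=.
    under [X in _ = X + _]eq_bigr do rewrite split_l.
    under [X in _ = _ + X]eq_bigr do rewrite split_r.
    rewrite !scaler_sumr; congr (_ + _); apply: eq_bigr => i _; by rewrite scalerA.
- move=> y Ay; exists 1%N, (fun=> 1), (fun=> y); split => //.
  + by rewrite big_ord1 powR1.
  + by rewrite big_ord1 scale1r.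
Qed.

Lemma conc (R : realType) (p u v w : R) : 0 < p -> p <= 1 -> 0 <= u -> 0 <= v ->
  0 <= w -> w <= 1 ->
  w * powR u p + (1 - w) * powR v p <= powR (w * u + (1 - w) * v) p.
Proof.
move=> p0 p1 u0 v0 w0 w1.
have q1 : 1 <= p^-1 by rewrite invf_ge1.
have := @convex_powR R _ q1 (Itv01 w0 w1) (powR u p) (powR v p).
rewrite !inE /= !in_itv /= !powR_ge0 => /(_ isT isT).
rewrite !convRE /= -!powRrM !mulfV ?gt_eqF // !powRr1 // => h.
set L := w * _ + _.
have L0 : 0 <= L by rewrite addr_ge0 // mulr_ge0 ?powR_ge0 ?subr_ge0.
have -> : L = powR (powR L p^-1) p by rewrite -powRrM mulVf ?gt_eqF // powRr1.
apply: ge0_ler_powR.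
- exact: ltW.
- by rewrite nnegrE powR_ge0.
- by rewrite nnegrE addr_ge0 // mulr_ge0 ?subr_ge0.
- by move: h; rewrite /conv /=; apply.
Qed.

Lemma fin_argmin (R : realType) m (P : pred 'I_m) (f : 'I_m -> R) :
  (exists i, P i) -> exists2 i, P i & forall j, P j -> f i <= f j.
Proof.
case=> i0 Pi0.
by case: (arg_minP f Pi0) => i Pi hi; exists i.
Qed.

Lemma red_pos (R : realType) (p : R) m (lam al : 'I_m -> R) :
  0 < p -> p <= 1 -> (forall i, 0 <= lam i) -> (exists i, 0 < al i) ->
  exists t (j : 'I_m), [/\ (forall i, 0 <= lam i - t * al i), lam j - t * al j = 0 &
     \sum_i powR (lam i - t * al i) p <= \sum_i powR (lam i) p].
Proof.
move=> p0 p1 hl hex.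
have [i1 Pi1 h1] := fin_argmin (P := fun i => 0 < al i) (fun i => lam i / al i) hex.
set t1 := lam i1 / al i1.
have t10 : 0 <= t1 by rewrite divr_ge0 // ?hl // ltW.
have hu : forall i, 0 <= lam i - t1 * al i.
  move=> i; rewrite subr_ge0; case: (ltP 0 (al i)) => hai.
  - by have := h1 i hai; rewrite ler_pdivlMr.
  - by apply: le_trans (hl i); exact: mulr_ge0_le0.
have hz1 : lam i1 - t1 * al i1 = 0 by rewrite /t1 divfK ?subrr // gt_eqF.
case: (boolP [exists i, al i < 0]) => [/existsP hneg | /existsPn hneg]; last first.
  exists t1, i1; split => //.
  apply: ler_sum => i _; apply: ge0_ler_powR; rewrite ?nnegrE ?hu ?hl ?(ltW p0) //.
  rewrite gerBl mulr_ge0 //; have := hneg i; by rewrite -leNgt.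
have [i2 Pi2 h2] := fin_argmin (P := fun i => al i < 0) (fun i => lam i / - al i) hneg.
set t2 := lam i2 / - al i2.
have t20 : 0 <= t2 by rewrite divr_ge0 // ?hl // oppr_ge0 ltW.
have hv : forall i, 0 <= lam i + t2 * al i.
  move=> i; case: (ltP (al i) 0) => hai.
  - have := h2 i hai; rewrite ler_pdivlMr ?oppr_gt0 // mulrN.
    by rewrite -subr_ge0 opprK.
  - by rewrite addr_ge0 // mulr_ge0.
have hz2 : lam i2 + t2 * al i2 = 0.
  by rewrite /t2 invrN mulrN mulNr divfK ?subrr // lt_eqF.
have hv' : forall i, lam i - (- t2) * al i = lam i + t2 * al i.
  by move=> i; rewrite mulNr opprK.
have [t1z|t1n] := eqVneq t1 0.
  exists t1, i1; split => //.
  by under eq_bigr do rewrite t1z mul0r subr0.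
have [t2z|t2n] := eqVneq t2 0.
  exists (- t2), i2; split.
  - by move=> i; rewrite hv'.
  - by rewrite hv'.
  - by under eq_bigr do rewrite hv' t2z mul0r addr0.
have t1p : 0 < t1 by rewrite lt_neqAle eq_sym t1n t10.
have t2p : 0 < t2 by rewrite lt_neqAle eq_sym t2n t20.
have s0 : t1 + t2 != 0 by rewrite gt_eqF ?addr_gt0.
set w := t2 / (t1 + t2).
have w0 : 0 <= w by rewrite divr_ge0 // ltW // addr_gt0.
have w1 : w <= 1 by rewrite ler_pdivrMr ?addr_gt0 // mul1r lerDr ltW.
have hlam : forall i, lam i = w * (lam i - t1 * al i) + (1 - w) * (lam i + t2 * al i).
  by move=> i; rewrite /w; field.
set U := \sum_i powR (lam i - t1 * al i) p.
set W := \sum_i powR (lam i + t2 * al i) p.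
set S := \sum_i powR (lam i) p.
have hc : w * U + (1 - w) * W <= S.
  rewrite /U /W /S !mulr_sumr -big_split /=; apply: ler_sum => i _.
  rewrite [in X in _ <= X](hlam i); apply: conc => //.
case: (leP U W) => hUW.
  exists t1, i1; split => //.
  rewrite -/U -/S; nra.
exists (- t2), i2; split.
- by move=> i; rewrite hv'.
- by rewrite hv'.
- under eq_bigr do rewrite hv'.
  rewrite -/W -/S; nra.
Qed.

Lemma red (R : realType) (p : R) m (lam al : 'I_m -> R) :
  0 < p -> p <= 1 -> (forall i, 0 <= lam i) -> (exists i, al i != 0) ->
  exists t (j : 'I_m), [/\ (forall i, 0 <= lam i - t * al i), lam j - t * al j = 0 &
     \sum_i powR (lam i - t * al i) p <= \sum_i powR (lam i) p].
Proof.
move=> p0 p1 hl [i0 hi0].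
case: (boolP [exists i, 0 < al i]) => [/existsP hpos|/existsPn hpos].
  exact: red_pos.
have hn : exists i, 0 < (fun i => - al i) i.
  exists i0; rewrite /= oppr_gt0 lt_neqAle hi0 /=.
  by have := hpos i0; rewrite -leNgt.
have [t [j [h1 h2 h3]]] := red_pos p0 p1 hl hn.
exists (- t), j; split.
- by move=> i; rewrite mulNr -mulrN; exact: h1.
- by rewrite mulNr -mulrN.
- by under eq_bigr do rewrite mulNr -mulrN.
Qed.

Lemma nthP (R : realType) (V : lmodType R) k (P : 'I_k -> V) (i : 'I_k) :
  [seq P i | i <- enum 'I_k]`_i = P i.
Proof. by rewrite (nth_map i) ?size_enum_ord // nth_ord_enum. Qed.

Lemma notfree (R : realType) n k (P : 'I_k -> 'rV[R]_n) :
  ~~ free [seq P i | i <- enum 'I_k] ->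
  exists c : 'I_k -> R, \sum_i c i *: P i = 0 /\ exists i, c i != 0.
Proof.
move=> hf; have : ~~ free (map_tuple P (ord_tuple k)) by [].
move/freeP => h; apply: contrapT => hne; apply: h => c hc i.
apply: contrapT => hci; apply: hne; exists c; split.
  apply: etrans hc; apply: eq_bigr => l _; congr (_ *: _).
  exact: (esym (nthP P l)).
by exists i; apply/eqP.
Qed.

Lemma free_size (R : realType) n (s : seq 'rV[R]_n) : free s -> (size s <= n)%N.
Proof.
move/eqP <-; have := dimvS (subvf (span s)).
by rewrite dimvf (dim_matrix R 1 n) GRing.mul1r.
Qed.

Lemma comb_sub (R : realType) (V : lmodType R) m (lam al : 'I_m -> R) (a : 'I_m -> V) t :
  \sum_i al i *: a i = 0 ->
  \sum_i (lam i - t * al i) *: a i = \sum_i lam i *: a i.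
Proof.
move=> h; under eq_bigr do rewrite scalerBl -scalerA.
by rewrite sumrB -scaler_sumr h scaler0 subr0.
Qed.

Lemma remove (R : realType) (V : lmodType R) (p : R) m (lam : 'I_m.+1 -> R)
   (a : 'I_m.+1 -> V) j : 0 < p -> lam j = 0 ->
  \sum_i powR (lam i) p = \sum_i powR (lam (lift j i)) p /\
  \sum_i lam i *: a i = \sum_i lam (lift j i) *: a (lift j i).
Proof.
move=> p0 hj; split; rewrite (bigD1_ord j) //= hj.
  by rewrite powR0 ?add0r // gt_eqF.
by rewrite scale0r add0r.
Qed.

Lemma sum_pos (R : realType) (p : R) m (lam : 'I_m -> R) :
  0 < p -> \sum_i powR (lam i) p != 0 -> 0 < \sum_i powR (lam i) p.
Proof.
move=> p0 h; rewrite lt_neqAle eq_sym h /=.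
by apply: sumr_ge0 => i _; exact: powR_ge0.
Qed.

Lemma sum_zero (R : realType) (p : R) m (lam : 'I_m -> R) :
  \sum_i powR (lam i) p = 0 -> forall i, lam i = 0.
Proof.
move=> h i; apply: (@powR_eq0_eq0 _ _ p).
apply: (psumr_eq0P (P := predT) (F := fun i => powR (lam i) p)) => //.
by move=> j _; exact: powR_ge0.
Qed.

Lemma main1 (R : realType) n (p : R) (A : set 'rV[R]_n) (x : 'rV[R]_n) :
  0 < p -> p < 1 -> x != 0 ->
  forall m (lam : 'I_m -> R) (a : 'I_m -> 'rV[R]_n),
  (forall i, A (a i)) -> (forall i, 0 <= lam i) -> \sum_i powR (lam i) p <= 1 ->
  x = \sum_i lam i *: a i ->
  exists k (P : 'I_k -> 'rV[R]_n),
    [/\ (k <= n)%N, (forall i, A (P i)), free [seq P i | i <- enum 'I_k]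
      & pconv p (range P) x].
Proof.
move=> p0 p1 x0; elim=> [|m IH] lam a hA hl hs hx.
  by move: x0; rewrite hx big_ord0 eqxx.
case: (boolP (free [seq a i | i <- enum 'I_m.+1])) => hf.
  exists m.+1, a; split => //.
  - by have := free_size hf; rewrite size_map size_enum_ord.
  - rewrite hx; apply: pc_in_hull => //; apply: sum_pos => //.
    apply/eqP => /sum_zero hz; move: x0; rewrite hx.
    by under eq_bigr do rewrite hz scale0r; rewrite big1 // eqxx.
have [al [hal [i0 hi0]]] := notfree hf.
have [t [j [h1 h2 h3]]] := red p0 (ltW p1) hl (ex_intro _ i0 hi0).
have [e1 e2] := @remove R _ p m (fun i => lam i - t * al i) a j p0 h2.
apply: (IH (fun i => lam (lift j i) - t * al (lift j i)) (fun i => a (lift j i))).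
- by move=> i; exact: hA.
- by move=> i; exact: h1.
- by rewrite -e1; exact: le_trans h3 hs.
- by rewrite -e2 comb_sub.
Qed.

Lemma main0 (R : realType) n (p : R) (A : set 'rV[R]_n) :
  0 < p -> p < 1 ->
  forall m (lam : 'I_m -> R) (a : 'I_m -> 'rV[R]_n),
  (forall i, A (a i)) -> (forall i, 0 <= lam i) -> \sum_i powR (lam i) p <= 1 ->
  0 < \sum_i powR (lam i) p ->
  \sum_i lam i *: a i = 0 ->
  exists k (P : 'I_k -> 'rV[R]_n),
    [/\ (k <= n.+1)%N, (forall i, A (P i)) & pconv p (range P) 0].
Proof.
move=> p0 p1; elim=> [|m IH] lam a hA hl hs hpos hx.
  by move: hpos; rewrite big_ord0 ltxx.
case: (leqP m.+1 n.+1) => hm.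
  by exists m.+1, a; split => //; rewrite -hx; apply: pc_in_hull.
pose b := fun i => row_mx (a i) (const_mx 1 : 'rV[R]_1).
have hf : ~~ free [seq b i | i <- enum 'I_m.+1].
  apply/negP => /free_size; rewrite size_map size_enum_ord addn1.
  by rewrite leqNgt hm.
have [al [hal [i0 hi0]]] := notfree hf.
have hal1 : \sum_i al i *: a i = 0.
  have := congr1 lsubmx hal; rewrite linear_sum linear0 /= => h.
  apply: etrans h; by apply: eq_bigr => i _; rewrite linearZ /= row_mxKl.
have hal2 : \sum_i al i = 0.
  have := congr1 (fun M => rsubmx M 0 0) hal.
  rewrite /= linear_sum /= summxE !mxE => h.
  apply: etrans h; by apply: eq_bigr => i _; rewrite linearZ /= row_mxKr !mxE mulr1.
have [t [j [h1 h2 h3]]] := red p0 (ltW p1) hl (ex_intro _ i0 hi0).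
have [e1 e2] := @remove R _ p m (fun i => lam i - t * al i) a j p0 h2.
apply: (IH (fun i => lam (lift j i) - t * al (lift j i)) (fun i => a (lift j i))).
- by move=> i; exact: hA.
- by move=> i; exact: h1.
- by rewrite -e1; exact: le_trans h3 hs.
- rewrite -e1; apply: sum_pos => //; apply/eqP => /sum_zero hz.
  have hl0 : forall i, lam i = t * al i by move=> i; apply/eqP; rewrite -subr_eq0 hz.
  have : \sum_i lam i = 0 by under eq_bigr do rewrite hl0; rewrite -mulr_sumr hal2 mulr0.
  move=> hsum.
  have hz' : forall i, lam i = 0.
    move=> i; apply: (psumr_eq0P (P := predT) (F := lam)) => // l _; exact: hl.
  move: hpos; rewrite big1 ?ltxx // => i _.
  by rewrite hz' powR0 // gt_eqF.
- by rewrite -e2 comb_sub.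
Qed.

Unset Implicit Arguments.
Set Strict Implicit.

Theorem theorem1 (R : realType) (n : nat) (p : R) (hp0 : 0 < p) (hp1 : p < 1)
    (A : set 'rV[R]_n) :
  (forall x : 'rV[R]_n, pconv p A x -> x != 0 ->
     exists (k : nat) (P : 'I_k -> 'rV[R]_n),
       [/\ (k <= n)%N, (forall i, A (P i)),
           free [seq P i | i <- enum 'I_k] & pconv p (range P) x])
  /\
  (pconv p A 0 ->
     exists (k : nat) (P : 'I_k -> 'rV[R]_n),
       [/\ (k <= n.+1)%N, (forall i, A (P i)) & pconv p (range P) 0]).
Proof.
split.
- move=> x hx x0.
  have [m [lam [a [hA hl hs hxe]]]] := hull_rep hp0 hx.
  by apply: (main1 hp0 hp1 x0 hA hl _ hxe); rewrite hs.
- move=> h0.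
  have [m [lam [a [hA hl hs hxe]]]] := hull_rep hp0 h0.
  by apply: (main0 hp0 hp1 hA hl _ _ (esym hxe)); rewrite hs // ltr01.
Qed.
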